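(* Let $W$ satisfy the hypotheses in the context. For $G=(g_{ij})\in\mathbb R^{2\times2}$ with $|G|$ small, $$W_\triangle(\mathbf{Id}+G)=\tfrac12Q(G)+o(|G|^2),\qquad Q(G)=\frac{3\alpha}{16}\Big(3g_{11}^2+3g_{22}^2+2g_{11}g_{22}+4\Big(\frac{g_{12}+g_{21}}2\Big)^2\Big).$$ Moreover, $Q(G)$ depends only on the symmetric part $(G^T+G)/2$, $Q$ is positive semidefinite (hence convex) on $\mathbb R^{2\times2}$, and positive definite and strictly convex on the subspace $\mathbb R^{2\times2}_{\rm sym}$ of symmetric matrices.
   Context: $R_{\mathcal L}\in SO(2)$, $\mathbf v_1=R_{\mathcal L}\mathbf e_1$, $\mathbf v_2=R_{\mathcal L}(\tfrac12,\tfrac{\sqrt3}2)^T$. $W:[0,\infty)\to[0,\infty]$ satisfies: $W\ge0$ with $W(r)=0$ iff $r=1$; $W$ continuous on $[0,\infty)$ and $C^2$ near $1$ with $\alpha:=W''(1)>0$; $\lim_{r\to\infty}W(r)=\beta$. $W_\triangle(F)=\frac12\big(W(|F\mathbf v_1|)+W(|F\mathbf v_2|)+W(|F(\mathbf v_2-\mathbf v_1)|)\big)$ for $F\in\mathbb R^{2\times2}$. *)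

(* Defs.v *)
From HB Require Import structures.
From mathcomp Require Import all_boot all_order all_algebra.
From mathcomp Require Import all_classical all_reals all_analysis.
Set Implicit Arguments. Unset Strict Implicit. Unset Printing Implicit Defensive.
Import Order.TTheory GRing.Theory Num.Theory.
Import numFieldNormedType.Exports.
Local Open Scope classical_set_scope.
Local Open Scope ring_scope.

Section Defs.
Variable R : realType.

Definition vnorm (v : 'cV[R]_2) : R := Num.sqrt (v 0 0 ^+ 2 + v 1 0 ^+ 2).

Definition frob (G : 'M[R]_2) : R :=
  Num.sqrt (\sum_(i < 2) \sum_(j < 2) G i j ^+ 2).

Definition col2 (a b : R) : 'cV[R]_2 :=
  \col_(i < 2) (if i == 0 then a else b).

Definition is_SO2 (Rl : 'M[R]_2) : Prop := Rl^T *m Rl = 1%:M /\ \det Rl = 1.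

Definition v1 (Rl : 'M[R]_2) : 'cV[R]_2 := Rl *m col2 1 0.
Definition v2 (Rl : 'M[R]_2) : 'cV[R]_2 := Rl *m col2 (2^-1) (Num.sqrt 3 / 2).

Definition Wtri (W : R -> \bar R) (Rl : 'M[R]_2) (F : 'M[R]_2) : \bar R :=
  ((W (vnorm (F *m v1 Rl)) + W (vnorm (F *m v2 Rl))
    + W (vnorm (F *m (v2 Rl - v1 Rl)))) * (2^-1)%:E)%E.

Definition Qform (alpha : R) (G : 'M[R]_2) : R :=
  (3 * alpha / 16) * (3 * G 0 0 ^+ 2 + 3 * G 1 1 ^+ 2 + 2 * G 0 0 * G 1 1
                      + 4 * ((G 0 1 + G 1 0) / 2) ^+ 2).

Definition W_hyp (W : R -> \bar R) (alpha beta : R) : Prop :=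
  (forall r, 0 <= r -> (0 <= W r)%E) /\
  (forall r, 0 <= r -> (W r = 0%E <-> r = 1)) /\
  {within [set r : R | 0 <= r], continuous W} /\
  (exists eta : R, 0 < eta /\ exists w : R -> R,
     (forall x, `|x - 1| < eta -> W x = (w x)%:E) /\
     (forall x, `|x - 1| < eta ->
        derivable w x 1 /\ derivable (derive1 w) x 1 /\
        {for x, continuous (derive1n 2 w)}) /\
     derive1n 2 w 1 = alpha) /\
  0 < alpha /\
  W r @[r --> +oo] --> beta%:E.

End Defs.

(* Main.v *)
Require Import Defs.
From HB Require Import structures.
From mathcomp Require Import all_boot all_order all_algebra.
From mathcomp Require Import all_classical all_reals all_analysis.
From mathcomp Require Import ring lra.
Import Order.TTheory GRing.Theory Num.Theory.
Import numFieldNormedType.Exports.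
Local Open Scope ring_scope.

Section Aux.
Context {R : realType}.
Local Open Scope classical_set_scope.
Local Open Scope ring_scope.

Definition mq (a b c d x y : R) := x * (a * x + b * y) + y * (c * x + d * y).

Lemma mvt_bound (f df : R -> R) (a b k : R) :
  (forall y, `|y - a| <= `|b - a| -> is_derive y 1 f (df y) /\ `|df y| <= k) ->
  `|f b - f a| <= k * `|b - a|.
Proof.
move=> H.
have dv : forall y, `|y - a| <= `|b - a| -> derivable f y 1.
  by move=> y /H [h _]; apply: ex_derive.
have [ab|ba|<-] := ltgtP a b.
- have cont : {within `[a, b], continuous f}.
    apply: derivable_within_continuous => y; rewrite in_itv /= => /andP[h1 h2].
    apply: dv; rewrite !ger0_norm ?subr_ge0 //; try lra; exact: ltW.
  have D : forall x, x \in `]a, b[ -> is_derive x 1 f (df x).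
    move=> x; rewrite in_itv /= => /andP[h1 h2]; apply: (fun h => (H x h).1).
    rewrite !ger0_norm ?subr_ge0 //; try lra; exact: ltW.
  have [c] := MVT_segment (ltW ab) D cont; rewrite in_itv /= => /andP[c1 c2] ->.
  have cH : `|c - a| <= `|b - a|.
    rewrite !ger0_norm ?subr_ge0 //; try lra.
  rewrite normrM; apply: ler_wpM2r => //; exact: (H c cH).2.
- have cont : {within `[b, a], continuous f}.
    apply: derivable_within_continuous => y; rewrite in_itv /= => /andP[h1 h2].
    apply: dv; rewrite !ler0_norm ?subr_le0 //; try lra; exact: ltW.
  have D : forall x, x \in `]b, a[ -> is_derive x 1 f (df x).
    move=> x; rewrite in_itv /= => /andP[h1 h2]; apply: (fun h => (H x h).1).
    rewrite !ler0_norm ?subr_le0 //; try lra; exact: ltW.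
  have [c] := MVT_segment (ltW ba) D cont; rewrite in_itv /= => /andP[c1 c2] E.
  have cH : `|c - a| <= `|b - a|.
    rewrite !ler0_norm ?subr_le0 //; try lra.
  rewrite -normrN opprB E normrM distrC; apply: ler_wpM2r => //; exact: (H c cH).2.
- by rewrite !subrr normr0 mulr0.
Qed.

Lemma dq (alpha z : R) : is_derive z 1 (fun y : R => alpha / 2 * (y - 1) ^+ 2) (alpha * (z - 1)).
Proof.
have -> : (fun y : R => alpha / 2 * (y - 1) ^+ 2) = (alpha / 2) *: ((@id R - cst 1) ^+ 2).
  by apply/funext => y.
apply: is_derive_eq.
rewrite /= subr0 expr1 /cst /= [_%:A]mulr1 /GRing.scale /=.
have -> : (id - (fun=> 1)) z = z - 1 :> R by [].
by field.
Qed.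

Lemma dlin (alpha z : R) : is_derive z 1 (fun y : R => alpha * (y - 1)) alpha.
Proof.
have -> : (fun y : R => alpha * (y - 1)) = alpha *: (@id R - cst 1).
  by apply/funext => y.
apply: is_derive_eq.
by rewrite /= subr0 /GRing.scale /= mulr1.
Qed.

Lemma taylor2 (w : R -> R) (eta alpha : R) :
  0 < eta ->
  (forall x, `|x - 1| < eta -> derivable w x 1 /\ derivable (derive1 w) x 1 /\
      {for x, continuous (derive1n 2 w)}) ->
  (derive1n 2 w) 1 = alpha -> w 1 = 0 -> (derive1 w) 1 = 0 ->
  forall e, 0 < e -> exists d, 0 < d /\ d <= eta /\
    forall x, `|x - 1| < d -> `|w x - alpha / 2 * (x - 1) ^+ 2| <= e * (x - 1) ^+ 2.
Proof.
move=> eta0 Hd w2 w0 w10 e e0.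
have [_ [_ c1]] : derivable w 1 1 /\ derivable (derive1 w) 1 1 /\ {for 1, continuous (derive1n 2 w)} by apply: Hd; rewrite subrr normr0.
have Hn : \forall t \near (1:R), `|alpha - derive1n 2 w t| <= e by rewrite -w2; exact: (cvgr_dist_le _ _ c1 _ e0).
have [d0 d00 Hb] := (nbhs_ballP _ _).1 Hn.
exists (Order.min d0 eta); split; first by rewrite lt_min d00 eta0.
split; first by rewrite ge_min lexx orbT.
have Hz : forall z, `|z - 1| < Order.min d0 eta ->
    `|(derive1 w) z - alpha * (z - 1)| <= e * `|z - 1|.
  move=> z; rewrite lt_min => /andP[zd ze].
  have := @mvt_bound (fun y => (derive1 w) y - alpha * (y - 1)) (fun y => (derive1n 2 w) y - alpha) 1 z e.
  rewrite subrr mulr0 w10 subr0 subr0 => H; apply: H => y yz.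
  have yd : `|y - 1| < d0 by apply: le_lt_trans yz zd.
  have ye : `|y - 1| < eta by apply: le_lt_trans yz ze.
  split.
    apply: is_deriveB; last exact: dlin.
    have [_ [dy _]] := Hd y ye.
    have := derivableP dy; rewrite -derive1E.
    done.
  have := Hb y; rewrite /ball /= => h; rewrite distrC; apply: h; by rewrite distrC.
move=> x xd.
have xe : `|x - 1| < eta by move: xd; rewrite lt_min => /andP[].
have := @mvt_bound (fun y => w y - alpha / 2 * (y - 1) ^+ 2)
   (fun y => (derive1 w) y - alpha * (y - 1)) 1 x (e * `|x - 1|).
rewrite subrr expr0n /= mulr0 w0 subr0 subr0 => H.
have -> : e * (x - 1) ^+ 2 = e * `|x - 1| * `|x - 1| by rewrite -mulrA -expr2 real_normK // num_real.
apply: H => y yx; split.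
  apply: is_deriveB; last exact: dq.
  have [dy _] := Hd y (le_lt_trans yx xe).
  by have := derivableP dy; rewrite -derive1E.
apply: le_trans (Hz y (le_lt_trans yx xd)) _.
by apply: ler_wpM2l => //; exact: ltW.
Qed.

Lemma wmin (w : R -> R) (eta : R) : 0 < eta ->
  (forall x, `|x - 1| < eta -> derivable w x 1) ->
  (forall x, `|x - 1| < eta -> 0 <= x -> 0 <= w x) -> w 1 = 0 -> derive1 w 1 = 0.
Proof.
move=> eta0 Hd Hp w0.
have e0 : 0 < Order.min eta 1 by rewrite lt_min eta0 ltr01.
have ee : Order.min eta 1 <= eta by rewrite ge_min lexx.
have e1 : Order.min eta 1 <= 1 by rewrite ge_min lexx orbT.
have Hin : forall t, t \in `]1 - Order.min eta 1, 1 + Order.min eta 1[ -> `|t - 1| < eta /\ 0 <= t.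
  move=> t; rewrite in_itv /= => /andP[h1 h2]; split; last by lra.
  apply: (lt_le_trans _ ee); rewrite ltr_norml; apply/andP; split; lra.
have := @derive1_at_min R w (1 - Order.min eta 1) (1 + Order.min eta 1) 1.
move=> H.
have : is_derive (1:R) (1:R) w (0:R).
  apply: H.
  - lra.
  - by move=> t /Hin [h _]; apply: Hd.
  - rewrite in_itv /=; apply/andP; split; lra.
  - by move=> t /Hin [h1 h2]; rewrite w0; apply: Hp.
by move=> D; rewrite derive1E derive_val.
Qed.

Lemma ident (a b c d p r t : R) : t ^+ 2 = 3 -> p ^+ 2 + r ^+ 2 = 1 ->
  mq a b c d p r ^+ 2
  + mq a b c d (p / 2 - r * t / 2) (r / 2 + p * t / 2) ^+ 2
  + mq a b c d (- p / 2 - r * t / 2) (- r / 2 + p * t / 2) ^+ 2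
  = 3 / 8 * (3 * a ^+ 2 + 3 * d ^+ 2 + 2 * a * d + (b + c) ^+ 2).
Proof.
move=> ht hp.
have E : mq a b c d p r ^+ 2
  + mq a b c d (p / 2 - r * t / 2) (r / 2 + p * t / 2) ^+ 2
  + mq a b c d (- p / 2 - r * t / 2) (- r / 2 + p * t / 2) ^+ 2
  - 3 / 8 * (3 * a ^+ 2 + 3 * d ^+ 2 + 2 * a * d + (b + c) ^+ 2) * (p ^+ 2 + r ^+ 2) ^+ 2
  = (t ^+ 2 - 3) * (((3%:R)/4%:R) * d ^+ 2 * p ^+ 2 * r ^+ 2 + ((3%:R)/8%:R) * d ^+ 2 * p ^+ 4 + ((1%:R)/8%:R) * d ^+ 2 * p ^+ 4 * t ^+ 2 + ((-(3)%:R)/4%:R) * c * d * p * r ^+ 3 + ((-(1)%:R)/4%:R) * c * d * p ^+ 3 * r * t ^+ 2 + ((1%:R)/8%:R) * c ^+ 2 * r ^+ 4 + ((-(1)%:R)/8%:R) * c ^+ 2 * p ^+ 2 * r ^+ 2 + ((1%:R)/8%:R) * c ^+ 2 * p ^+ 2 * r ^+ 2 * t ^+ 2 + ((1%:R)/8%:R) * c ^+ 2 * p ^+ 4 + ((-(3)%:R)/4%:R) * b * d * p * r ^+ 3 + ((-(1)%:R)/4%:R) * b * d * p ^+ 3 * r * t ^+ 2 + ((1%:R)/4%:R) * b * c * r ^+ 4 + ((-(1)%:R)/4%:R) * b * c * p ^+ 2 * r ^+ 2 + ((1%:R)/4%:R) * b * c * p ^+ 2 * r ^+ 2 * t ^+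 2 + ((1%:R)/4%:R) * b * c * p ^+ 4 + ((1%:R)/8%:R) * b ^+ 2 * r ^+ 4 + ((-(1)%:R)/8%:R) * b ^+ 2 * p ^+ 2 * r ^+ 2 + ((1%:R)/8%:R) * b ^+ 2 * p ^+ 2 * r ^+ 2 * t ^+ 2 + ((1%:R)/8%:R) * b ^+ 2 * p ^+ 4 + ((1%:R)/4%:R) * a * d * r ^+ 4 + ((-(1)%:R)/4%:R) * a * d * p ^+ 2 * r ^+ 2 + ((1%:R)/4%:R) * a * d * p ^+ 2 * r ^+ 2 * t ^+ 2 + ((1%:R)/4%:R) * a * d * p ^+ 4 + ((-(1)%:R)/4%:R) * a * c * p * r ^+ 3 * t ^+ 2 + ((-(3)%:R)/4%:R) * a * c * p ^+ 3 * r + ((-(1)%:R)/4%:R) * a * b * p * r ^+ 3 * t ^+ 2 + ((-(3)%:R)/4%:R) * a * b * p ^+ 3 * r + ((3%:R)/8%:R) * a ^+ 2 * r ^+ 4 + ((1%:R)/8%:R) * a ^+ 2 * r ^+ 4 * t ^+ 2 + ((3%:R)/4%:R) * a ^+ 2 * p ^+ 2 * r ^+ 2).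
  by rewrite /mq; field.
move: E; rewrite ht hp subrr mul0r expr1n mulr1 => /eqP; rewrite subr_eq0 => /eqP.
done.
Qed.

Lemma geo (a b c d x y f r : R) : x ^+ 2 + y ^+ 2 = 1 ->
  f ^+ 2 = a ^+ 2 + b ^+ 2 + c ^+ 2 + d ^+ 2 -> 0 <= f -> f <= 1 / 4 ->
  0 <= r -> r ^+ 2 = (x + (a * x + b * y)) ^+ 2 + (y + (c * x + d * y)) ^+ 2 ->
  `|r - 1| <= 2 * f /\ `|(r - 1) ^+ 2 - mq a b c d x y ^+ 2| <= 3 * f ^+ 3.
Proof.
move=> hxy hf f0 f4 r0 hr.
have hn : (a * x + b * y) ^+ 2 + (c * x + d * y) ^+ 2 <= f ^+ 2.
  have E : (a ^+ 2 + b ^+ 2 + c ^+ 2 + d ^+ 2) * (x ^+ 2 + y ^+ 2)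
     - ((a * x + b * y) ^+ 2 + (c * x + d * y) ^+ 2) = (a * y - b * x) ^+ 2 + (c * y - d * x) ^+ 2 by ring.
  move: E; rewrite hxy mulr1 -hf => E.
  have : 0 <= (a * y - b * x) ^+ 2 + (c * y - d * x) ^+ 2 by rewrite addr_ge0 // sqr_ge0.
  lra.
move: hr hn; rewrite /mq.
set u := a * x + b * y; set v := c * x + d * y => hr hn.
set m := x * u + y * v.
have hm : m ^+ 2 <= u ^+ 2 + v ^+ 2.
  have E : (u ^+ 2 + v ^+ 2) * (x ^+ 2 + y ^+ 2) - m ^+ 2 = (u * y - v * x) ^+ 2 by rewrite /m; ring.
  move: E; rewrite hxy mulr1 => E.
  have : 0 <= (u * y - v * x) ^+ 2 by rewrite sqr_ge0.
  lra.
have hr2 : r ^+ 2 = 1 + 2 * m + (u ^+ 2 + v ^+ 2).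
  have E : (x + u) ^+ 2 + (y + v) ^+ 2 = (x ^+ 2 + y ^+ 2) + 2 * (x * u + y * v) + (u ^+ 2 + v ^+ 2) by ring.
  by rewrite hr E hxy.
have mf : m ^+ 2 <= f ^+ 2 by lra.
have mf1 : `|m| <= f.
  by rewrite -ler_sqr ?nnegrE // ?normr_ge0 // real_normK // num_real.
have m4 : -1/4 <= m <= 1/4.
  move: mf1; rewrite ler_norml => /andP[h1 h2]; lra.
have rm : 1 + m <= r.
  have : (r - (1 + m)) * (r + (1 + m)) >= 0.
    have -> : (r - (1 + m)) * (r + (1 + m)) = r ^+ 2 - (1 + m) ^+ 2 by ring.
    rewrite hr2; nra.
  nra.
have rm2 : r - 1 - m <= f ^+ 2.
  have E : (r - 1 - m) * (r + 1 + m) = u ^+ 2 + v ^+ 2 - m ^+ 2.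
    have -> : (r - 1 - m) * (r + 1 + m) = r ^+ 2 - (1 + m) ^+ 2 by ring.
    rewrite hr2; ring.
  nra.
have f1 : f ^+ 2 <= f / 4 by nra.
split.
  rewrite ler_norml; apply/andP; split; move: mf1; rewrite ler_norml => /andP[h1 h2]; lra.
have -> : (r - 1) ^+ 2 - m ^+ 2 = (r - 1 - m) * (r - 1 + m) by ring.
rewrite normrM.
have h1 : `|r - 1 - m| <= f ^+ 2 by rewrite ger0_norm; lra.
have h2 : `|r - 1 + m| <= 3 * f.
  rewrite ler_norml; apply/andP; split; move: mf1; rewrite ler_norml => /andP[h3 h4]; nra.
have -> : 3 * f ^+ 3 = f ^+ 2 * (3 * f) by ring.
by apply: ler_pM => //; apply: normr_ge0.
Qed.

Lemma sum2 (F : 'I_2 -> R) : \sum_(i < 2) F i = F 0 + F 1.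
Proof. by rewrite big_ord_recl big_ord1; congr (F _ + F _); apply/val_inj. Qed.

Lemma so2 (Rl : 'M[R]_2) : is_SO2 Rl ->
  Rl 0 0 ^+ 2 + Rl 1 0 ^+ 2 = 1 /\ Rl 0 1 = - Rl 1 0 /\ Rl 1 1 = Rl 0 0.
Proof.
case=> /matrixP H hd.
have h00 := H 0 0; have h01 := H 0 1; have h11 := H 1 1.
move: h00 h01 h11; rewrite !mxE !sum2 !mxE /=.
move: hd; rewrite (expand_det_row _ 0) sum2 /cofactor !det_mx11 !mxE /=.
have -> : lift 0 0 = 1 :> 'I_2 by apply/val_inj.
have -> : lift 1 0 = 0 :> 'I_2 by apply/val_inj.
rewrite expr0 expr1 !mul1r => hd h00 h01 h11.
have E : (Rl 0 1 + Rl 1 0) ^+ 2 + (Rl 1 1 - Rl 0 0) ^+ 2 = 0.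
  have -> : (Rl 0 1 + Rl 1 0) ^+ 2 + (Rl 1 1 - Rl 0 0) ^+ 2 =
    (Rl 0 0 * Rl 0 0 + Rl 1 0 * Rl 1 0) + (Rl 0 1 * Rl 0 1 + Rl 1 1 * Rl 1 1)
    - 2 * (Rl 0 0 * Rl 1 1 + Rl 0 1 * (-1 * Rl 1 0)) by ring.
  rewrite hd h00 h11; lra.
have [e1 e2] : Rl 0 1 + Rl 1 0 = 0 /\ Rl 1 1 - Rl 0 0 = 0.
  split; apply/eqP; rewrite -sqrf_eq0 eq_le sqr_ge0 andbT; rewrite -E.
    by rewrite lerDl sqr_ge0.
  by rewrite lerDr sqr_ge0.
split; first by rewrite !expr2.
split; lra.
Qed.

Lemma vnormE (G : 'M[R]_2) (v : 'cV[R]_2) :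
  vnorm ((1%:M + G) *m v) = Num.sqrt ((v 0 0 + (G 0 0 * v 0 0 + G 0 1 * v 1 0)) ^+ 2
     + (v 1 0 + (G 1 0 * v 0 0 + G 1 1 * v 1 0)) ^+ 2).
Proof.
rewrite /vnorm !mxE !sum2 !mxE /=.
by congr (Num.sqrt (_ ^+ 2 + _ ^+ 2)); rewrite /= ?mulr1n ?mulr0n; ring.
Qed.

Lemma frobE (G : 'M[R]_2) :
  frob G ^+ 2 = G 0 0 ^+ 2 + G 0 1 ^+ 2 + G 1 0 ^+ 2 + G 1 1 ^+ 2 /\ 0 <= frob G.
Proof.
rewrite /frob !sum2 sqr_sqrtr ?sqrtr_ge0 //; last by rewrite !addr_ge0 // sqr_ge0.
by split => //; ring.
Qed.

Lemma v1E (Rl : 'M[R]_2) : v1 Rl 0 0 = Rl 0 0 /\ v1 Rl 1 0 = Rl 1 0.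
Proof. by rewrite /v1 /col2 !mxE !sum2 !mxE /=; split; ring. Qed.

Lemma v2E (Rl : 'M[R]_2) : v2 Rl 0 0 = Rl 0 0 / 2 + Rl 0 1 * (Num.sqrt 3 / 2)
  /\ v2 Rl 1 0 = Rl 1 0 / 2 + Rl 1 1 * (Num.sqrt 3 / 2).
Proof. by rewrite /v2 /col2 !mxE !sum2 !mxE /=; split; ring. Qed.

Lemma v3E (Rl : 'M[R]_2) : (v2 Rl - v1 Rl) 0 0 = v2 Rl 0 0 - v1 Rl 0 0
  /\ (v2 Rl - v1 Rl) 1 0 = v2 Rl 1 0 - v1 Rl 1 0.
Proof. by rewrite !mxE. Qed.

Definition PP (a b c d : R) := 3 * a ^+ 2 + 3 * d ^+ 2 + 2 * a * d + (b + c) ^+ 2.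

Lemma QformE (alpha : R) (G : 'M[R]_2) :
  Qform alpha G = 3 * alpha / 16 * PP (G 0 0) (G 0 1) (G 1 0) (G 1 1).
Proof. by rewrite /Qform /PP; field. Qed.

Lemma PP_ge0 a b c d : 0 <= PP a b c d.
Proof.
have -> : PP a b c d = 2 * (a + d) ^+ 2 + (a - d) ^+ 2 + (b + c) ^+ 2 by rewrite /PP; ring.
have h1 := sqr_ge0 (a + d); have h2 := sqr_ge0 (a - d); have h3 := sqr_ge0 (b + c); lra.
Qed.

Lemma PP_gt0 a b d : (a != 0) || (b != 0) || (d != 0) -> 0 < PP a b b d.
Proof.
have -> : PP a b b d = 2 * (a + d) ^+ 2 + (a - d) ^+ 2 + 4 * b ^+ 2 by rewrite /PP; ring.
have h1 := sqr_ge0 (a + d); have h2 := sqr_ge0 (a - d); have h3 := sqr_ge0 b.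
case/orP => [/orP[]|] H.
- have : 0 < (a + d) ^+ 2 + (a - d) ^+ 2.
    rewrite lt_def; apply/andP; split; last by rewrite addr_ge0.
    apply/eqP => E.
    have E1 : (a + d) ^+ 2 = 0 by apply/eqP; rewrite eq_le sqr_ge0 andbT -E lerDl.
    have E2 : (a - d) ^+ 2 = 0 by apply/eqP; rewrite eq_le sqr_ge0 andbT -E lerDr.
    move: E1 E2 => /eqP; rewrite sqrf_eq0 => /eqP E1 /eqP; rewrite sqrf_eq0 => /eqP E2.
    by move/eqP: H; apply; lra.
  lra.
- have : 0 < b ^+ 2 by rewrite exprn_even_gt0.
  lra.
- have : 0 < (a + d) ^+ 2 + (a - d) ^+ 2.
    rewrite lt_def; apply/andP; split; last by rewrite addr_ge0.
    apply/eqP => E.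
    have E1 : (a + d) ^+ 2 = 0 by apply/eqP; rewrite eq_le sqr_ge0 andbT -E lerDl.
    have E2 : (a - d) ^+ 2 = 0 by apply/eqP; rewrite eq_le sqr_ge0 andbT -E lerDr.
    move: E1 E2 => /eqP; rewrite sqrf_eq0 => /eqP E1 /eqP; rewrite sqrf_eq0 => /eqP E2.
    by move/eqP: H; apply; lra.
  lra.
Qed.

Lemma PP_conv (a b c d a' b' c' d' t : R) :
  t * PP a b c d + (1 - t) * PP a' b' c' d'
  - PP (t * a + (1 - t) * a') (t * b + (1 - t) * b') (t * c + (1 - t) * c') (t * d + (1 - t) * d')
  = t * (1 - t) * PP (a - a') (b - b') (c - c') (d - d').
Proof. by rewrite /PP; ring. Qed.


Lemma ord2 (i : 'I_2) : i = 0 \/ i = 1.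
Proof. case: i => [[|[|i]] Hi]; [left; exact: val_inj|right; exact: val_inj|by []]. Qed.

Lemma piece (W : R -> \bar R) (w : R -> R) (alpha e d1 eta : R) (G : 'M[R]_2) (v : 'cV[R]_2) :
  0 <= alpha -> 0 <= e -> d1 <= eta ->
  (forall x, `|x - 1| < eta -> W x = (w x)%:E) ->
  (forall x, `|x - 1| < d1 -> `|w x - alpha / 2 * (x - 1) ^+ 2| <= e * (x - 1) ^+ 2) ->
  frob G <= 1 / 4 -> 2 * frob G < d1 ->
  v 0 0 ^+ 2 + v 1 0 ^+ 2 = 1 ->
  exists wr, W (vnorm ((1%:M + G) *m v)) = wr%:E /\
    `|wr - alpha / 2 * mq (G 0 0) (G 0 1) (G 1 0) (G 1 1) (v 0 0) (v 1 0) ^+ 2|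
      <= e * (4 * frob G ^+ 2) + alpha / 2 * (3 * frob G ^+ 3).
Proof.
move=> a0 e0 de Hw Ht f4 fd hv.
have [hf f0] := frobE G.
rewrite vnormE.
set S := (_ + _ ^+ 2).
have S0 : 0 <= S by rewrite /S addr_ge0 // sqr_ge0.
set r := Num.sqrt S.
have r0 : 0 <= r by rewrite sqrtr_ge0.
have r2 : r ^+ 2 = S by rewrite sqr_sqrtr.
have [g1 g2] := @geo _ _ _ _ _ _ _ _ hv hf f0 f4 r0 r2.
have rd : `|r - 1| < d1 by apply: le_lt_trans g1 fd.
exists (w r); split; first by apply: Hw; apply: lt_le_trans rd de.
have h1 := Ht r rd.
have h2 : (r - 1) ^+ 2 <= 4 * frob G ^+ 2.
  rewrite -real_normK ?num_real //.
  have -> : 4 * frob G ^+ 2 = (2 * frob G) ^+ 2 by ring.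
  by rewrite ler_sqr ?nnegrE ?normr_ge0 // mulr_ge0.
set m := mq _ _ _ _ _ _ in g2 *.
have -> : w r - alpha / 2 * m ^+ 2 = (w r - alpha / 2 * (r - 1) ^+ 2)
   + alpha / 2 * ((r - 1) ^+ 2 - m ^+ 2) by ring.
apply: le_trans (ler_normD _ _) _.
apply: lerD.
  apply: le_trans h1 _; exact: ler_wpM2l.
rewrite normrM ger0_norm; last by apply: divr_ge0.
apply: ler_wpM2l => //; exact: divr_ge0.
Qed.

End Aux.


Section Aux2.
Context {R : realType}.
Local Open Scope ring_scope.

Lemma final (wa wb wc ma mb mc alpha eps f Q : R) :
  0 <= eps -> 0 <= alpha -> 0 <= f -> alpha * f <= eps / 5 ->
  Q = alpha / 2 * (ma ^+ 2 + mb ^+ 2 + mc ^+ 2) ->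
  `|wa - alpha / 2 * ma ^+ 2| <= eps / 12 * (4 * f ^+ 2) + alpha / 2 * (3 * f ^+ 3) ->
  `|wb - alpha / 2 * mb ^+ 2| <= eps / 12 * (4 * f ^+ 2) + alpha / 2 * (3 * f ^+ 3) ->
  `|wc - alpha / 2 * mc ^+ 2| <= eps / 12 * (4 * f ^+ 2) + alpha / 2 * (3 * f ^+ 3) ->
  `|(wa + wb + wc) * 2^-1 - Q / 2| <= eps * f ^+ 2.
Proof.
move=> ep0 a0 f0 af -> ha hb hc.
have -> : (wa + wb + wc) * 2^-1 - alpha / 2 * (ma ^+ 2 + mb ^+ 2 + mc ^+ 2) / 2
  = ((wa - alpha / 2 * ma ^+ 2) + (wb - alpha / 2 * mb ^+ 2) + (wc - alpha / 2 * mc ^+ 2)) / 2 by field.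
rewrite normrM (@ger0_norm _ (2^-1)); last by rewrite invr_ge0 ler0n.
have h3 := ler_normD (wa - alpha / 2 * ma ^+ 2 + (wb - alpha / 2 * mb ^+ 2)) (wc - alpha / 2 * mc ^+ 2).
have h2 := ler_normD (wa - alpha / 2 * ma ^+ 2) (wb - alpha / 2 * mb ^+ 2).
have f2 : 0 <= f ^+ 2 by rewrite sqr_ge0.
have af3 : alpha * f ^+ 3 <= eps / 5 * f ^+ 2.
  have -> : alpha * f ^+ 3 = (alpha * f) * f ^+ 2 by ring.
  by apply: ler_wpM2r.
set N := `|_ + _ + _| in h3 *.
have : N <= 3 * (eps / 12 * (4 * f ^+ 2) + alpha / 2 * (3 * f ^+ 3)) by lra.
move=> hN.
have : N / 2 <= 3 * (eps / 12 * (4 * f ^+ 2) + alpha / 2 * (3 * f ^+ 3)) / 2.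
  by rewrite ler_pM2r // invr_gt0.
move=> hN2.
apply: le_trans hN2 _.
have -> : 3 * (eps / 12 * (4 * f ^+ 2) + alpha / 2 * (3 * f ^+ 3)) / 2
   = eps / 2 * f ^+ 2 + 9 / 4 * (alpha * f ^+ 3) by field.
have e0 : 0 <= eps * f ^+ 2 by apply: mulr_ge0.
move: af3 e0; have -> : eps / 5 * f ^+ 2 = (eps * f ^+ 2) / 5 by ring.
have -> : eps / 2 * f ^+ 2 = (eps * f ^+ 2) / 2 by ring.
set P := eps * f ^+ 2; set Y := alpha * f ^+ 3; lra.
Qed.
End Aux2.

Theorem lemma3p2 (R : realType) (Rl : 'M[R]_2) (W : R -> \bar R) (alpha beta : R) :
  is_SO2 Rl -> W_hyp W alpha beta ->
  (forall eps : R, 0 < eps -> exists delta : R, 0 < delta /\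
     forall G : 'M[R]_2, frob G < delta ->
       (`| Wtri W Rl (1%:M + G) - (Qform alpha G / 2)%:E | <= (eps * frob G ^+ 2)%:E)%E) /\
  (forall G : 'M[R]_2, Qform alpha G = Qform alpha (2^-1 *: (G^T + G))) /\
  (forall G : 'M[R]_2, 0 <= Qform alpha G) /\
  (forall (G H : 'M[R]_2) (t : R), 0 <= t <= 1 ->
     Qform alpha (t *: G + (1 - t) *: H)
       <= t * Qform alpha G + (1 - t) * Qform alpha H) /\
  (forall G : 'M[R]_2, G^T = G -> G != 0 -> 0 < Qform alpha G) /\
  (forall (G H : 'M[R]_2) (t : R), G^T = G -> H^T = H -> G != H -> 0 < t < 1 ->
     Qform alpha (t *: G + (1 - t) *: H)
       < t * Qform alpha G + (1 - t) * Qform alpha H).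

Proof.
move=> hSO hW.
have [p2 [hq hs]] := so2 _ hSO.
case: hW => Wnn [W0 [_ [[eta [eta0 [w [Hw [Hd w2]]]]] [a0 _]]]].
have c0 : 0 < 3 * alpha / 16 by apply: divr_gt0 => //; apply: mulr_gt0.
split.
  move=> eps eps0.
  have w0 : w 1 = 0.
    have h := (W0 1 ler01).2 erefl.
    rewrite Hw in h; first by case: h.
    by rewrite subrr normr0.
  have pos : forall x, `|x - 1| < eta -> 0 <= x -> 0 <= w x.
    by move=> x hx x0; have := Wnn x x0; rewrite Hw // lee_fin.
  have w1 := @wmin _ w eta eta0 (fun x hx => (Hd x hx).1) pos w0.
  have e0 : 0 < eps / 12 by apply: divr_gt0.
  have [d1 [d10 [d1e Ht]]] := @taylor2 _ w eta alpha eta0 Hd w2 w0 w1 _ e0.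
  exists (Order.min (1 / 4) (Order.min (d1 / 2) (eps / (5 * alpha)))).
  split.
    rewrite !lt_min; apply/andP; split; first by apply: divr_gt0.
    apply/andP; split; first by apply: divr_gt0.
    by apply: divr_gt0 => //; apply: mulr_gt0.
  move=> G; rewrite !lt_min => /andP[h1 /andP[h2 h3]].
  have [hf f0] := frobE G.
  have f4 : frob G <= 1 / 4 by apply: ltW.
  have fd : 2 * frob G < d1 by lra.
  have af : alpha * frob G <= eps / 5.
    move: h3; rewrite ltr_pdivlMr; last by apply: mulr_gt0.
    move=> h3; rewrite ler_pdivlMr //; lra.
  have T : Num.sqrt 3 ^+ 2 = 3 :> R by rewrite sqr_sqrtr.
  have hv1 : v1 Rl 0 0 ^+ 2 + v1 Rl 1 0 ^+ 2 = 1 by have [-> ->] := v1E Rl.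
  have x2 : v2 Rl 0 0 = Rl 0 0 / 2 - Rl 1 0 * Num.sqrt 3 / 2 by rewrite (v2E Rl).1 hq; ring.
  have y2 : v2 Rl 1 0 = Rl 1 0 / 2 + Rl 0 0 * Num.sqrt 3 / 2 by rewrite (v2E Rl).2 hs; ring.
  have x3 : (v2 Rl - v1 Rl) 0 0 = - Rl 0 0 / 2 - Rl 1 0 * Num.sqrt 3 / 2.
    by rewrite (v3E Rl).1 x2 (v1E Rl).1; lra.
  have y3 : (v2 Rl - v1 Rl) 1 0 = - Rl 1 0 / 2 + Rl 0 0 * Num.sqrt 3 / 2.
    by rewrite (v3E Rl).2 y2 (v1E Rl).2; lra.
  have hv2 : v2 Rl 0 0 ^+ 2 + v2 Rl 1 0 ^+ 2 = 1.
    rewrite x2 y2.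
    have -> : (Rl 0 0 / 2 - Rl 1 0 * Num.sqrt 3 / 2) ^+ 2 + (Rl 1 0 / 2 + Rl 0 0 * Num.sqrt 3 / 2) ^+ 2
      = (Rl 0 0 ^+ 2 + Rl 1 0 ^+ 2) * (1 + Num.sqrt 3 ^+ 2) / 4 by field.
    by rewrite p2 T; field.
  have hv3 : (v2 Rl - v1 Rl) 0 0 ^+ 2 + (v2 Rl - v1 Rl) 1 0 ^+ 2 = 1.
    rewrite x3 y3.
    have -> : (- Rl 0 0 / 2 - Rl 1 0 * Num.sqrt 3 / 2) ^+ 2 + (- Rl 1 0 / 2 + Rl 0 0 * Num.sqrt 3 / 2) ^+ 2
      = (Rl 0 0 ^+ 2 + Rl 1 0 ^+ 2) * (1 + Num.sqrt 3 ^+ 2) / 4 by field.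
    by rewrite p2 T; field.
  have a0' : 0 <= alpha by apply: ltW.
  have e0' : 0 <= eps / 12 by apply: ltW.
  have [wa [Ea Ba]] := @piece _ W w alpha (eps / 12) d1 eta G (v1 Rl) a0' e0' d1e Hw Ht f4 fd hv1.
  have [wb [Eb Bb]] := @piece _ W w alpha (eps / 12) d1 eta G (v2 Rl) a0' e0' d1e Hw Ht f4 fd hv2.
  have [wc [Ec Bc]] := @piece _ W w alpha (eps / 12) d1 eta G (v2 Rl - v1 Rl) a0' e0' d1e Hw Ht f4 fd hv3.
  rewrite (v1E Rl).1 (v1E Rl).2 in Ba.
  rewrite x2 y2 in Bb.
  rewrite x3 y3 in Bc.
  rewrite /Wtri Ea Eb Ec -!EFinD /= lee_fin.
  apply: (final _ _ _ _ _ _ _ _ _ _ (ltW eps0)) a0' f0 af _ Ba Bb Bc.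
  have I := ident (G 0 0) (G 0 1) (G 1 0) (G 1 1) _ _ _ T p2.
  rewrite QformE /PP.
  set X := 3 * G 0 0 ^+ 2 + _.
  set Y := mq _ _ _ _ _ _ ^+ 2 + _ + _ in I *.
  by rewrite I /X; field.
split.
  move=> G; rewrite !QformE /PP !mxE /=; congr (_ * _); by field.
split.
  move=> G; rewrite QformE; apply: mulr_ge0; [exact: ltW | exact: PP_ge0].
split.
  move=> G H t /andP[t0 t1]; rewrite !QformE !mxE.
  rewrite -subr_ge0.
  set c := 3 * alpha / 16.
  set Y := PP (t * G 0 0 + (1 - t) * H 0 0) _ _ _.
  have -> : t * (c * PP (G 0 0) (G 0 1) (G 1 0) (G 1 1)) + (1 - t) * (c * PP (H 0 0) (H 0 1) (H 1 0) (H 1 1)) - c * Y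
     = c * (t * PP (G 0 0) (G 0 1) (G 1 0) (G 1 1) + (1 - t) * PP (H 0 0) (H 0 1) (H 1 0) (H 1 1) - Y) by ring.
  rewrite /Y PP_conv.
  apply: mulr_ge0; first exact: ltW.
  apply: mulr_ge0; last exact: PP_ge0.
  apply: mulr_ge0; lra.
split.
  move=> G /matrixP hG hG0; rewrite QformE.
  have e01 : G 0 1 = G 1 0 by move: (hG 1 0); rewrite mxE.
  rewrite e01; apply: mulr_gt0 => //; apply: PP_gt0.
  apply/negPn/negP => /norP [/norP [/negPn/eqP h1 /negPn/eqP h2] /negPn/eqP h3].
  move/eqP: hG0; apply; apply/matrixP => i j; rewrite mxE.
  case: (ord2 i) => ->; case: (ord2 j) => ->.
  - exact: h1.
  - by rewrite e01.
  - exact: h2.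
  - exact: h3.
move=> G H t /matrixP hG /matrixP hH hGH /andP[t0 t1]; rewrite !QformE !mxE -subr_gt0.
set c := 3 * alpha / 16.
set Y := PP (t * G 0 0 + (1 - t) * H 0 0) _ _ _.
have -> : t * (c * PP (G 0 0) (G 0 1) (G 1 0) (G 1 1)) + (1 - t) * (c * PP (H 0 0) (H 0 1) (H 1 0) (H 1 1)) - c * Y
   = c * (t * PP (G 0 0) (G 0 1) (G 1 0) (G 1 1) + (1 - t) * PP (H 0 0) (H 0 1) (H 1 0) (H 1 1) - Y) by ring.
rewrite /Y PP_conv.
apply: mulr_gt0 => //.
apply: mulr_gt0; first by apply: mulr_gt0; lra.
have e01 : G 0 1 - H 0 1 = G 1 0 - H 1 0.
  by move: (hG 1 0) (hH 1 0); rewrite !mxE => -> ->.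
rewrite e01; apply: PP_gt0.
apply/negPn/negP => /norP [/norP [/negPn/eqP h1 /negPn/eqP h2] /negPn/eqP h3].
move/eqP: hGH; apply; apply/matrixP => i j.
case: (ord2 i) => ->; case: (ord2 j) => ->; apply/eqP; rewrite -subr_eq0; apply/eqP.
- exact: h1.
- by rewrite e01.
- exact: h2.
- exact: h3.
Qed.
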